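(* Let $f$ be a $C$-class classifier with $C\ge 2$ whose outputs satisfy $f(x)\in(0,1)^C$, $\sum_c f(x)_c=1$ for all $x$, and let $S$, $\mathcal{D}$ be as in the context. Let $\mathcal{Q}_{cvx}$ be the family of all convex subsets of $\mathbb{R}^{2C}$. For every threshold $\tau\in\mathbb{R}$ and every $m\in\{m_{msp,\tau},m_{ent,\tau},m_{ce,\tau},m_{me,\tau}\}$, $$\mathrm{Adv}(m;f,S,\mathcal{D})\le D_{\mathcal{Q}_{cvx}}(S,\mathcal{D}).$$
   Context: A labeled data point is $z=(x,y)$ with $y\in\{0,1\}^C$ one-hot; $f(x)_c$ denotes the $c$-th coordinate of $f(x)$. $S$ is a finite training set (multiset) of labeled points, $\mathbb{P}_{z\sim S}$ is uniform over $S$, and $\mathcal{D}$ is a probability distribution on labeled points. An MIA is a map $m(z,f)\in\{0,1\}$ with advantage $\mathrm{Adv}(m;f,S,\mathcal{D}):=\mathbb{P}_{z\sim S}(m(z,f)=1)-\mathbb{P}_{z\sim\mathcal{D}}(m(z,f)=1)$. For a score function $h$ and threshold $\tau$, the thresholded MIA is $m_{h,\tau}(z,f)=\mathbb{1}[h(z,f)<\tau]$. The scores are: $msp(z,f)=-\max_{c\in[C]}f(x)_c$; $ent(z,f)=-\sum_{c\in[C]}f(x)_c\log f(x)_c$; $ce(z,f)=-\sum_{c\in[C]}y_c\log f(x)_c$; $me(z,f)=-\sum_{c\in[C]}\big((1-f(x)_c)\log(f(x)_c)\,y_c+f(x)_c\log(1-f(x)_c)\,(1-y_c)\big)$. For $Q\subseteq\mathbb{R}^{2C}$,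 $D(S,\mathcal{D}\mid Q):=\left|\mathbb{P}_{(x,y)\sim S}((f(x),y)\in Q)-\mathbb{P}_{(x,y)\sim\mathcal{D}}((f(x),y)\in Q)\right|$, and for a family $\mathcal{Q}$, $D_{\mathcal{Q}}(S,\mathcal{D}):=\sup_{Q\in\mathcal{Q}}D(S,\mathcal{D}\mid Q)$. *)

(* Defs.v *)
From HB Require Import structures.
From mathcomp Require Import all_boot all_order all_algebra.
From mathcomp Require Import all_classical all_reals all_analysis.
Set Implicit Arguments. Unset Strict Implicit. Unset Printing Implicit Defensive.
Import Order.TTheory GRing.Theory Num.Theory.
Local Open Scope classical_set_scope.
Local Open Scope ring_scope.

(* Class labels 'I_n.+1 form a (discrete) measurable space, so that labeled
   points X * 'I_C form a measurable space (product sigma-algebra). *)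
HB.instance Definition _ (n : nat) := isPointed.Build 'I_n.+1 ord0.
HB.instance Definition _ (n : nat) := @isMeasurable.Build default_measure_display
  'I_n.+1 discrete_measurable discrete_measurable0
  discrete_measurableC discrete_measurableU.

Section Defs.
Variable R : realType.

Definition onehot (C : nat) (c : 'I_C) : 'rV[R]_C := \row_j (j == c)%:R.

Definition msp_s C (p y : 'rV[R]_C) : R := - \big[Num.max/0]_(c < C) p ord0 c.
Definition ent_s C (p y : 'rV[R]_C) : R := - \sum_(c < C) p ord0 c * ln (p ord0 c).
Definition ce_s C (p y : 'rV[R]_C) : R := - \sum_(c < C) y ord0 c * ln (p ord0 c).
Definition me_s C (p y : 'rV[R]_C) : R :=
  - \sum_(c < C) ((1 - p ord0 c) * ln (p ord0 c) * y ord0 c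
                  + p ord0 c * ln (1 - p ord0 c) * (1 - y ord0 c)).

Inductive score_kind := MSP | ENT | CE | ME.

Definition score_fun (k : score_kind) C : 'rV[R]_C -> 'rV[R]_C -> R :=
  match k with MSP => @msp_s C | ENT => @ent_s C | CE => @ce_s C | ME => @me_s C end.

Variables (d : measure_display) (X : measurableType d) (n : nat).
Local Notation C := n.+2.
Local Notation Z := (X * 'I_C)%type.

Definition score (k : score_kind) (f : X -> 'rV[R]_C) (z : Z) : R :=
  score_fun k (f z.1) (onehot z.2).

Definition mia (h : Z -> R) (tau : R) (z : Z) : bool := h z < tau.

Definition PS (S : seq Z) (A : pred Z) : R := (count A S)%:R / (size S)%:R.

Definition PD (D : probability Z R) (A : pred Z) : R := fine (D [set z | A z]).

Definition Adv (m : Z -> bool) (S : seq Z) (D : probability Z R) : R :=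
  PS S m - PD D m.

Definition emb (f : X -> 'rV[R]_C) (z : Z) : 'rV[R]_(C + C) :=
  row_mx (f z.1) (onehot z.2).

Definition DQ (f : X -> 'rV[R]_C) (S : seq Z) (D : probability Z R)
  (Q : set 'rV[R]_(C + C)) : R :=
  `| PS S (fun z => `[< Q (emb f z) >]) - PD D (fun z => `[< Q (emb f z) >]) |.

Definition D_cvx (f : X -> 'rV[R]_C) (S : seq Z) (D : probability Z R) : \bar R :=
  ereal_sup [set (DQ f S D Q)%:E | Q in
    [set Q : set 'rV[R]_(C + C) |
       convex_set (Q : set (convex_lmodType 'rV[R]_(C + C)))
       /\ measurable (emb f @^-1` Q)]].

End Defs.

(* Main.v *)
Require Import Defs.
From HB Require Import structures.
From mathcomp Require Import all_boot all_order all_algebra.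
From mathcomp Require Import all_classical all_reals all_analysis.
From mathcomp Require Import ring lra measurable_realfun measurable_fun_approximation.
Set Implicit Arguments. Unset Strict Implicit. Unset Printing Implicit Defensive.
Import Order.TTheory GRing.Theory Num.Theory.
Local Open Scope classical_set_scope.
Local Open Scope ring_scope.

Section An.
Variable R : realType.

Lemma ln_le (x : R) : 0 < x -> ln x <= x - 1.
Proof.
move=> x0; have := @le_ln1Dx R (x - 1).
rewrite [1 + _]addrC subrK; apply; lra.
Qed.

Lemma xlnx_conv (a b t : R) : 0 < a -> 0 < b -> 0 <= t <= 1 ->
  (t * a + (1 - t) * b) * ln (t * a + (1 - t) * b) <=
  t * (a * ln a) + (1 - t) * (b * ln b).
Proof.
move=> a0 b0 /andP[t0 t1].
set m := t * a + (1 - t) * b.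
have m0 : 0 < m by rewrite /m; nra.
have key : forall c, 0 < c -> c * ln m - c * ln c <= m - c.
  move=> c c0.
  have h := @ln_le (m / c) (divr_gt0 m0 c0).
  rewrite ln_div ?posrE // in h.
  have e : c * (m / c) = m by rewrite mulrCA divff ?gt_eqF // mulr1.
  have := ler_wpM2l (ltW c0) h.
  rewrite mulrBr mulrBr e mulr1; lra.
have ha := key a a0; have hb := key b b0.
have ha' := ler_wpM2l t0 ha.
have t1' : 0 <= 1 - t by rewrite subr_ge0.
have hb' := ler_wpM2l t1' hb.
rewrite /m in ha' hb' *.
nra.
Qed.

Lemma ln_conc (a b t : R) : 0 < a -> 0 < b -> 0 <= t <= 1 ->
  t * ln a + (1 - t) * ln b <= ln (t * a + (1 - t) * b).
Proof.
move=> a0 b0 /andP[t0 t1].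
have := @concave_ln R (Itv01 t0 t1) a b a0 b0.
by rewrite !convRE.
Qed.

Definition G (x : R) := - ((1 - x) * ln x).

Lemma G_conv (a b t : R) : 0 < a -> 0 < b -> 0 <= t <= 1 ->
  G (t * a + (1 - t) * b) <= t * G a + (1 - t) * G b.
Proof.
move=> a0 b0 t01.
have h1 := xlnx_conv a0 b0 t01.
have h2 := ln_conc a0 b0 t01.
rewrite /G.
set m := t * a + (1 - t) * b in h1 h2 *.
nra.
Qed.

Lemma H_conv (a b t : R) : a < 1 -> b < 1 -> 0 <= t <= 1 ->
  - ((t * a + (1 - t) * b) * ln (1 - (t * a + (1 - t) * b))) <=
  t * - (a * ln (1 - a)) + (1 - t) * - (b * ln (1 - b)).
Proof.
move=> a1 b1 t01.
have := @G_conv (1 - a) (1 - b) t; rewrite !subr_gt0 => /(_ a1 b1 t01).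
rewrite /G.
have -> : t * (1 - a) + (1 - t) * (1 - b) = 1 - (t * a + (1 - t) * b) by ring.
have e : forall x : R, 1 - (1 - x) = x by move=> x; ring.
by rewrite !e.
Qed.
End An.

Local Open Scope convex_scope.
Lemma convE (R : realType) m (x y : convex_lmodType 'rV[R]_m) (l : {i01 R}) :
  (x <| l |> y) = l%:num *: x + (1 - l%:num) *: y.
Proof. by []. Qed.
Local Close Scope convex_scope.

Section Main.
Variables (R : realType) (d : measure_display) (X : measurableType d) (n : nat).
Variable (f : X -> 'rV[R]_(n.+2)).
Variables (S : seq (X * 'I_n.+2)) (S_ne : S != [::]) (D : probability (X * 'I_n.+2)%type R).
Local Notation C := n.+2.
Local Notation Z := (X * 'I_C)%type.

Definition Qof (A : 'I_C -> 'rV[R]_C -> Prop) : set 'rV[R]_(C + C) :=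
  fun v => forall c, 0 <= rsubmx v ord0 c <= 1 /\ (rsubmx v ord0 c = 1 -> A c (lsubmx v)).

Lemma Qof_emb A z : Qof A (emb f z) <-> A z.2 (f z.1).
Proof.
rewrite /Qof /emb row_mxKl row_mxKr; split.
  by move=> /(_ z.2) [_]; apply; rewrite /onehot mxE eqxx.
move=> Hz c; rewrite /onehot mxE; case: eqP => [->|_]; split => //.
- by rewrite lexx ler01.
- by rewrite lexx ler01.
- by move/eqP; rewrite eq_sym oner_eq0.
Qed.

Lemma Qof_convex A :
  (forall c p q (t : R), 0 < t < 1 -> A c p -> A c q -> A c (t *: p + (1 - t) *: q)) ->
  convex_set (Qof A : set (convex_lmodType _)).
Proof.
move=> Aconv; apply/convex_setW => x y; rewrite !inE => Hx Hy k k0 k1.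
rewrite inE convE => c.
set t := k%:num in k0 k1 *.
have [/andP[x0 x1] Ax] := Hx c; have [/andP[y0 y1] Ay] := Hy c.
rewrite !mxE in x0 x1 y0 y1 Ax Ay.
rewrite linearD !linearZ /= !mxE.
split.
  by apply/andP; split; nra.
move=> H1.
have ex : x ord0 (rshift C c) = 1 by nra.
have ey : y ord0 (rshift C c) = 1 by nra.
rewrite linearD !linearZ /=.
by apply: Aconv; [rewrite k0 k1 | apply: Ax | apply: Ay].
Qed.

Lemma PS_C (m : pred Z) : PS R S (predC m) = 1 - PS R S m.
Proof.
rewrite /PS.
have hs : (size S)%:R != 0 :> R by rewrite pnatr_eq0 size_eq0.
have := count_predC m S; move/(congr1 (fun k => k%:R : R)); rewrite natrD => hsz.
rewrite -hsz in hs *.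
by field.
Qed.

Lemma adv_le (m : pred Z) (Q : set 'rV[R]_(C + C)) :
  convex_set (Q : set (convex_lmodType _)) -> measurable [set z | m z] ->
  (forall z, Q (emb f z) <-> m z) \/ (forall z, Q (emb f z) <-> ~~ m z) ->
  ((Adv m S D)%:E <= D_cvx f S D)%E.
Proof.
move=> cQ mm H.
have mQ : measurable (emb f @^-1` Q).
  case: H => H.
    by rewrite (_ : _ @^-1` _ = [set z | m z]) //; apply/seteqP; split => z /= /H.
  rewrite (_ : _ @^-1` _ = ~` [set z | m z]); first exact: measurableC.
  by apply/seteqP; split => z /=; [move/H/negP | move/negP/H].
apply: (@le_trans _ _ (DQ f S D Q)%:E); last first.
  by apply: ereal_sup_ubound; exists Q.
rewrite lee_fin /DQ /Adv.
case: H => H.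
  have -> : (fun z => `[< Q (emb f z) >]) = m.
    by apply/funext => z; apply/idP/idP => [/asboolP/H|/H/asboolP].
  exact: ler_norm.
have -> : (fun z => `[< Q (emb f z) >]) = predC m.
  by apply/funext => z; apply/idP/idP => [/asboolP/H|/H/asboolP].
rewrite PS_C /PD.
rewrite (_ : [set z | predC m z] = ~` [set z | m z]); last first.
  by apply/seteqP; split => z /= /negP.
rewrite probability_setC // fineB ?fin_num_measure //.
rewrite (_ : 1 - PS R S m - (fine 1 - fine (D [set z | m z])) =
  - (PS R S m - fine (D [set z | m z]))); last by rewrite /=; ring.
by rewrite normrN ler_norm.
Qed.

Variable f_meas : forall c : 'I_n.+2, measurable_fun setT (fun x => f x ord0 c).

Lemma mf c : measurable_fun setT (fun z : Z => f z.1 ord0 c).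
Proof. exact: (measurableT_comp (f_meas c) measurable_fst). Qed.

Lemma my c : measurable_fun setT (fun z : Z => onehot R z.2 ord0 c).
Proof.
apply: (measurableT_comp (f := fun i : 'I_C => onehot R i ord0 c)) => //.
Qed.

Lemma mbigmax (F : 'I_C -> Z -> R) : (forall c, measurable_fun setT (F c)) ->
  measurable_fun setT (fun z => \big[Num.max/0]_(c < C) F c z).
Proof.
move=> mF; elim: (index_enum _) => [|a s IH].
  under eq_fun do rewrite big_nil; exact: measurable_cst.
under eq_fun do rewrite big_cons.
exact: (measurable_maxr (mF a) IH).
Qed.

Lemma mscore k : measurable_fun setT (score k f).
Proof.
have ml : forall c, measurable_fun setT (fun z : Z => ln (f z.1 ord0 c)).
  by move=> c; apply: measurableT_comp; [exact: measurable_ln | exact: mf].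
have m1 : forall c, measurable_fun setT (fun z : Z => 1 - f z.1 ord0 c).
  by move=> c; apply: measurable_funB => //; exact: mf.
case: k; rewrite /score /=.
- apply: measurable_funN; exact: mbigmax (fun c => mf c).
- apply: measurable_funN; apply: measurable_sum => c.
  exact: measurable_funM (mf c) (ml c).
- apply: measurable_funN; apply: measurable_sum => c.
  exact: measurable_funM (my c) (ml c).
- apply: measurable_funN; apply: measurable_sum => c.
  apply: measurable_funD.
    apply: measurable_funM; last exact: my.
    exact: measurable_funM (m1 c) (ml c).
  apply: measurable_funM.
    apply: measurable_funM; first exact: mf.
    by apply: measurableT_comp; [exact: measurable_ln | exact: m1].
  by apply: measurable_funB => //; exact: my.
Qed.

Lemma mmia k tau : measurable [set z | mia (score k f) tau z].
Proof.
have := measurable_fun_ltr (mscore k) (measurable_cst tau).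
move=> /(_ measurableT [set true] I); rewrite setTI.
by rewrite /mia; congr measurable; apply/seteqP; split => z /=.
Qed.
End Main.

Unset Implicit Arguments. Set Strict Implicit.

Theorem theorem1 (R : realType) (d : measure_display) (X : measurableType d)
  (n : nat) (f : X -> 'rV[R]_(n.+2))
  (f_meas : forall c : 'I_n.+2, measurable_fun setT (fun x => f x ord0 c))
  (f_open01 : forall x c, 0 < f x ord0 c < 1)
  (f_sum1 : forall x, \sum_(c < n.+2) f x ord0 c = 1)
  (S : seq (X * 'I_n.+2)) (S_ne : S != [::])
  (D : probability (X * 'I_n.+2)%type R)
  (k : score_kind) (tau : R) :
  ((Adv (mia (score k f) tau) S D)%:E <= D_cvx f S D)%E.
Proof.
have hf := f_open01.
have mm := mmia f_meas.
case: k.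
- apply: (@adv_le _ _ _ _ f S S_ne D _ (Qof (fun _ p => forall j, p ord0 j <= - tau))).
  + apply: Qof_convex => c p q t /andP[t0 t1] Hp Hq j; rewrite !mxE.
    have := Hp j; have := Hq j; nra.
  + exact: mm.
  right => z; rewrite Qof_emb /mia /score /= /msp_s -leNgt lerNr; split.
    move=> H; apply: bigmax_le => //.
    apply: le_trans (H ord0); have /andP[h0 _] := hf z.1 ord0; exact: ltW.
  by move=> H j; apply: le_trans H; exact: le_bigmax.
- apply: (@adv_le _ _ _ _ f S S_ne D _ (Qof (fun _ p => (forall j, 0 < p ord0 j) /\
     \sum_(j < n.+2) p ord0 j * ln (p ord0 j) <= - tau))).
  + apply: Qof_convex => c p q t /andP[t0 t1] [Pp Sp] [Pq Sq]; split.
      by move=> j; rewrite !mxE; have := Pp j; have := Pq j; nra.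
    apply: (@le_trans _ _ (t * \sum_(j < n.+2) p ord0 j * ln (p ord0 j) +
       (1 - t) * \sum_(j < n.+2) q ord0 j * ln (q ord0 j))); last by nra.
    rewrite !mulr_sumr -big_split /=; apply: ler_sum => j _; rewrite !mxE.
    by apply: xlnx_conv => //; rewrite (ltW t0) (ltW t1).
  + exact: mm.
  right => z; rewrite Qof_emb /mia /score /= /ent_s -leNgt lerNr; split.
    by case.
  by move=> H; split => // j; case/andP: (hf z.1 j).
- apply: (@adv_le _ _ _ _ f S S_ne D _ (Qof (fun c p => expR (- tau) < p ord0 c))).
  + apply: Qof_convex => c p q t /andP[t0 t1] Hp Hq; rewrite !mxE; nra.
  + exact: mm.
  left => z; rewrite Qof_emb /mia /score /= /ce_s.
  rewrite (bigD1 z.2) //= /onehot mxE eqxx mul1r big1 ?addr0; last first.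
    by move=> j /negbTE hj; rewrite mxE hj mul0r.
  have /andP[h0 _] := hf z.1 z.2.
  have e : f z.1 ord0 z.2 = expR (ln (f z.1 ord0 z.2)) by rewrite lnK ?posrE.
  by rewrite ltrNl {1}e ltr_expR.
- apply: (@adv_le _ _ _ _ f S S_ne D _ (Qof (fun c p => (forall j, 0 < p ord0 j < 1) /\
     me_s p (onehot R c) < tau))).
  + apply: Qof_convex => c p q t /andP[t0 t1] [Pp Sp] [Pq Sq]; split.
      move=> j; rewrite !mxE; have /andP[? ?] := Pp j; have /andP[? ?] := Pq j.
      by apply/andP; split; nra.
    apply: (@le_lt_trans _ _ (t * me_s p (onehot R c) + (1 - t) * me_s q (onehot R c)));
      last by nra.
    rewrite /me_s -!sumrN !mulr_sumr -big_split /=; apply: ler_sum => j _.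
    rewrite !mxE.
    have /andP[a0 a1] := Pp j; have /andP[b0 b1] := Pq j.
    have t01 : 0 <= t <= 1 by rewrite (ltW t0) (ltW t1).
    have hG := G_conv a0 b0 t01; have hH := H_conv a1 b1 t01.
    rewrite /G in hG.
    by case: (j == c) => /=; nra.
  + exact: mm.
  left => z; rewrite Qof_emb; split; first by case.
  by move=> H; split => // j; exact: hf.
Qed.
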